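(* Let $G=(V,E)$ be a finite undirected unweighted simple graph, let $\mathbf{L}$ be its Laplacian matrix and let $\mathbf{W}=(\mathbf{I}+\mathbf{L})^{-1}=(w_{ij})$ be its forest matrix. For $u\in V$ let $\mathcal{F}_{uu}$ be the set of spanning rooted forests of $G$ in which $u$ is a root, and define $$s(u)=\frac{1}{|\mathcal{F}_{uu}|}\sum_{F\in\mathcal{F}_{uu}}|F|_u,$$ where $|F|_u$ is the number of vertices of the tree rooted at $u$ in $F$. Define $\mathrm{ForestSim}(u,v)=\frac{\min(s(u),s(v))}{\max(s(u),s(v))}$. Then for all $u,v\in V$, $$\mathrm{ForestSim}(u,v)=\frac{\min(w_{uu},w_{vv})}{\max(w_{uu},w_{vv})}.$$
   Context: For $G$ with adjacency matrix $\mathbf{A}$ and diagonal degree matrix $\mathbf{D}=\mathrm{diag}(d_1,\dots,d_n)$, the Laplacian is $\mathbf{L}=\mathbf{D}-\mathbf{A}$, and $\mathbf{I}$ is the $n\times n$ identity matrix. A spanning forest of $G$ is an acyclic subgraph containing all vertices of $G$; a spanning rooted forest is a spanning forest with one root marked in each of its trees. *)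

(* Defs.v *)
From HB Require Import structures.
From mathcomp Require Import all_boot all_order all_algebra.
From mathcomp Require Import boolp.
Set Implicit Arguments. Unset Strict Implicit. Unset Printing Implicit Defensive.
Import Order.TTheory GRing.Theory Num.Theory.
Local Open Scope ring_scope.

Definition simple_graph n (e : rel 'I_n) : Prop :=
  symmetric e /\ irreflexive e.

Section Graph.
Variables (R : realFieldType) (n : nat) (e : rel 'I_n).

Definition degree (i : 'I_n) : nat := #|[set j | e i j]|.
Definition adjmx : 'M[R]_n := \matrix_(i, j) (if e i j then 1 else 0).
Definition degmx : 'M[R]_n := \matrix_(i, j) (if i == j then (degree i)%:R else 0).
Definition laplacian : 'M[R]_n := degmx - adjmx.
Definition forest_matrix : 'M[R]_n := invmx (1%:M + laplacian).

Definition is_edge (f : {set 'I_n}) : bool :=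
  [exists x, exists y, e x y && (f == [set x; y])].

Definition sub_adj (F : {set {set 'I_n}}) : rel 'I_n :=
  fun x y => (x != y) && ([set x; y] \in F).

Definition acyclic (F : {set {set 'I_n}}) : Prop :=
  forall s : seq 'I_n, (3 <= size s)%N -> uniq s -> ~~ cycle (sub_adj F) s.

(* spanning forest of G: an acyclic subgraph containing all vertices
   (the vertex set is always all of 'I_n, so it is given by its edge set). *)
Definition spanning_forest (F : {set {set 'I_n}}) : Prop :=
  (forall f, f \in F -> is_edge f) /\ acyclic F.

Definition spanning_rooted_forest (FR : {set {set 'I_n}} * {set 'I_n}) : Prop :=
  spanning_forest FR.1 /\
  forall x, exists! r, r \in FR.2 /\ connect (sub_adj FR.1) x r.

Definition rooted_forests_at (u : 'I_n) : {set {set {set 'I_n}} * {set 'I_n}} :=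
  [set FR | `[< spanning_rooted_forest FR >] && (u \in FR.2)].

Definition tree_size (F : {set {set 'I_n}}) (u : 'I_n) : nat :=
  #|[set x | connect (sub_adj F) u x]|.

Definition s_val (u : 'I_n) : R :=
  (\sum_(FR in rooted_forests_at u) tree_size FR.1 u)%:R
    / (#|rooted_forests_at u|)%:R.

Definition forest_sim (u v : 'I_n) : R :=
  Num.min (s_val u) (s_val v) / Num.max (s_val u) (s_val v).

End Graph.

(* Main.v *)
Require Import Defs.
From HB Require Import structures.
From mathcomp Require Import all_boot all_order all_algebra.
From mathcomp Require Import boolp ring.
Import Order.TTheory GRing.Theory Num.Theory.
Set Implicit Arguments. Unset Strict Implicit. Unset Printing Implicit Defensive.

Section G.
Variables (n : nat) (e : rel 'I_n).
Hypotheses (esym : symmetric e) (eirr : irreflexive e).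

Implicit Types (F : {set {set 'I_n}}) (a b x y : 'I_n).
Local Notation conn F := (connect (sub_adj F)).

Lemma sub_adj_sym (F : {set {set 'I_n}}) : symmetric (sub_adj F).
Proof. by move=> x y; rewrite /sub_adj eq_sym setUC. Qed.

Lemma conn_sym (F : {set {set 'I_n}}) : symmetric (conn F).
Proof. exact: sym_connect_sym (sub_adj_sym F). Qed.

Lemma conn_mono (F F' : {set {set 'I_n}}) x y :
  F \subset F' -> conn F x y -> conn F' x y.
Proof.
move=> sF; apply: connect_sub => a b /andP[ab abF]; apply: connect1.
by rewrite /sub_adj ab (subsetP sF).
Qed.

Lemma set2_eq (a b c d : 'I_n) : [set a; b] = [set c; d] ->
  (a = c /\ b = d) \/ (a = d /\ b = c).
Proof.
move=> E.
have ha : a \in [set c; d] by rewrite -E set21.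
have hb : b \in [set c; d] by rewrite -E set22.
have hc : c \in [set a; b] by rewrite E set21.
have hd : d \in [set a; b] by rewrite E set22.
case/set2P: ha => ?; case/set2P: hb => ?; subst; auto;
  case/set2P: hc => ?; case/set2P: hd => ?; subst; auto.
Qed.

Lemma set2_neq (x y a b : 'I_n) : a != x -> a != y -> [set x; y] != [set a; b].
Proof.
move=> ax ay; apply/eqP => E.
have : a \in [set x; y] by rewrite E set21.
by case/set2P => /eqP; rewrite ?(negPf ax) ?(negPf ay).
Qed.

Lemma sub_adj_add F a b x y :
  sub_adj (F :|: [set [set a; b]]) x y -> [set x; y] != [set a; b] ->
  sub_adj F x y.
Proof.
by rewrite /sub_adj in_setU in_set1 => /andP[-> /orP[-> | ->]].
Qed.

Lemma conn_add F a b x y : conn (F :|: [set [set a; b]]) x y ->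
  conn F x y \/ ((conn F x a \/ conn F x b) /\ (conn F a y \/ conn F b y)).
Proof.
case/connectP=> p; elim: p x => [|z p IH] x /=.
  by move=> _ ->; left; exact: connect0.
case/andP=> hxz hp hy.
have [E|NE] := eqVneq [set x; z] [set a; b].
  have xab : conn F x a \/ conn F x b.
    by case: (set2_eq E) => [[-> _]|[-> _]]; [left|right]; apply: connect0.
  case: (IH z hp hy) => [Hzy | [_ Hy]]; right; split => //.
  by case: (set2_eq E) => [[_ <-]|[_ <-]]; [right|left].
have xz : conn F x z by apply: connect1; exact: sub_adj_add hxz NE.
case: (IH z hp hy) => [Hzy | [Hz Hy]].
  by left; apply: connect_trans xz Hzy.
right; split => //.
by case: Hz => H; [left|right]; apply: connect_trans xz H.
Qed.

Lemma acyclic_sub (F F' : {set {set 'I_n}}) :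
  F \subset F' -> acyclic F' -> acyclic F.
Proof.
move=> sF ac s hs us; apply: contra (ac s hs us); apply: sub_cycle.
by move=> x y /andP[xy xyF]; rewrite /sub_adj xy (subsetP sF).
Qed.

Lemma acyclic_add F a b : acyclic F -> a != b -> ~~ conn F a b ->
  acyclic (F :|: [set [set a; b]]).
Proof.
move=> ac ab nab s hs us; apply/negP => hc.
have [ain | anin] := boolP (a \in s); last first.
  have: cycle (sub_adj F) s.
    apply: (@sub_in_cycle _ [pred z | z != a]); last exact: hc.
      move=> x y /= xa ya hxy; apply: sub_adj_add hxy _.
      by apply: set2_neq; rewrite eq_sym.
    by apply/allP => z zs /=; apply: contraNneq anin => <-.
  by apply/negP; apply: ac.
case: (rot_to ain) => k p E.
have hc' : cycle (sub_adj (F :|: [set [set a; b]])) (a :: p) by rewrite -E rot_cycle.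
have us' : uniq (a :: p) by rewrite -E rot_uniq.
have hs' : (3 <= size (a :: p))%N by rewrite -E size_rot.
case: p E hc' us' hs' => [|h q] // E hc' us' hs'.
case: q E hc' us' hs' => [|h2 q] // E hc' us' hs'.
set l := last h2 q.
move: hc'; rewrite /cycle rcons_path => /andP[/andP[ah hp] la].
rewrite /= -/l in la.
have [anh anq] : a != h /\ a \notin h2 :: q.
  by move: us'; rewrite [uniq _]/= {1}in_cons negb_or => /andP[/andP[]].
have [hnq uq] : h \notin h2 :: q /\ uniq (h2 :: q).
  by move: us'; rewrite [uniq _]/= => /andP[_ /andP[]].
have hl : h != l.
  by apply: contraNneq hnq => ->; apply: mem_last.
have al : a != l by apply/negP => /eqP al; move: anq; rewrite al mem_last.
have hpF : path (sub_adj F) h (h2 :: q).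
  apply: (@sub_in_path _ [pred z | z != a]); last exact: hp.
    move=> x y /= xa ya hxy; apply: sub_adj_add hxy _.
    by apply: set2_neq; rewrite eq_sym.
  apply/allP => z; rewrite /= inE => /orP[/eqP -> | zq]; first by rewrite eq_sym.
  by apply: contraNneq anq => <-.
have chl : conn F h l by apply/connectP; exists (h2 :: q).
have [bh | bh] := eqVneq b h.
  have laF : sub_adj F l a.
    apply: sub_adj_add la _; apply/eqP => /set2_eq [[la' _]|[lb _]].
      by rewrite la' eqxx in al.
    by rewrite lb bh eqxx in hl.
  move: nab; rewrite conn_sym bh => /negP; apply.
  by apply: connect_trans chl (connect1 laF).
have ahF : sub_adj F a h.
  apply: sub_adj_add ah _; apply/eqP => /set2_eq [[_ hb]|[ab' _]].
    by rewrite hb eqxx in bh.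
  by rewrite ab' eqxx in ab.
have [bl | bl] := eqVneq b l.
  move: nab => /negP; apply; rewrite bl.
  by apply: connect_trans (connect1 ahF) chl.
have laF : sub_adj F l a.
  apply: sub_adj_add la _; apply/eqP => /set2_eq [[la' _]|[lb _]].
    by rewrite la' eqxx in al.
  by rewrite lb eqxx in bl.
have: cycle (sub_adj F) [:: a, h, h2 & q].
  by rewrite /cycle rcons_path /= ahF -/l laF andbT; exact: hpF.
apply/negP; apply: ac => //.
Qed.


Definition FRT := ({set {set 'I_n}} * {set 'I_n})%type.
Implicit Types (FR : FRT).
Definition srf FR := spanning_rooted_forest e FR.

Lemma srf_edges FR f : srf FR -> f \in FR.1 -> is_edge e f.
Proof. by case=> [[H _] _]; apply: H. Qed.

Lemma srf_acyc FR : srf FR -> acyclic FR.1.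
Proof. by case=> [[_ H] _]. Qed.

Lemma srf_root FR x : srf FR -> exists r, r \in FR.2 /\ conn FR.1 x r.
Proof. by case=> _ /(_ x) [r [H _]]; exists r. Qed.

Lemma srf_uniq FR x r1 r2 : srf FR -> r1 \in FR.2 -> conn FR.1 x r1 ->
  r2 \in FR.2 -> conn FR.1 x r2 -> r1 = r2.
Proof.
case=> _ /(_ x) [r [_ H]] h1 c1 h2 c2.
by rewrite -(H r1 (conj h1 c1)) -(H r2 (conj h2 c2)).
Qed.

Lemma srf_roots FR r1 r2 : srf FR -> r1 \in FR.2 -> r2 \in FR.2 ->
  conn FR.1 r1 r2 -> r1 = r2.
Proof. by move=> H h1 h2 c; apply: (srf_uniq H h1 (connect0 _ _) h2 c). Qed.

Definition Phi i FR v : FRT := (FR.1 :|: [set [set i; v]], FR.2 :\ i).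

Lemma edge_set_in F i v : [set i; v] \in F :|: [set [set i; v]].
Proof. by rewrite in_setU in_set1 eqxx orbT. Qed.

Lemma Phi_conn FR i v x y : srf FR -> i \in FR.2 -> ~~ conn FR.1 v i ->
  y \in FR.2 -> y != i ->
  conn (Phi i FR v).1 x y = conn FR.1 x y || (conn FR.1 x i && conn FR.1 v y).
Proof.
move=> H iS nvi yS yi.
have iv : i != v by apply: contraNneq nvi => ->; apply: connect0.
apply/idP/idP.
  case/conn_add => [-> // | [xab [aby|bvy]]].
    by move: yi; rewrite (srf_roots H iS yS aby) eqxx.
  case: xab => [xi|xv]; first by rewrite xi bvy orbT.
  by rewrite (connect_trans xv bvy).
have sub : FR.1 \subset (Phi i FR v).1 by apply: subsetUl.
case/orP => [/(conn_mono sub) // | /andP[xi vy]].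
apply: connect_trans (conn_mono sub xi) _.
apply: connect_trans (conn_mono sub vy).
by apply: connect1; rewrite /sub_adj iv edge_set_in.
Qed.

Lemma Phi_valid FR i v : srf FR -> i \in FR.2 -> e i v -> ~~ conn FR.1 v i ->
  srf (Phi i FR v).
Proof.
move=> H iS eiv nvi.
have iv : i != v by apply: contraNneq nvi => ->; apply: connect0.
split; first split.
- move=> f; rewrite /= in_setU in_set1 => /orP[fF|/eqP->].
    exact: srf_edges H fF.
  by apply/existsP; exists i; apply/existsP; exists v; rewrite eiv eqxx.
- apply: acyclic_add => //; first exact: srf_acyc H.
  by rewrite conn_sym.
have [rv [rvS vrv]] := srf_root v H.
have rvi : rv != i by apply: contraNneq nvi => <-.
have key : forall x r1 r2, r1 \in (Phi i FR v).2 -> conn (Phi i FR v).1 x r1 ->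
    r2 \in (Phi i FR v).2 -> conn (Phi i FR v).1 x r2 -> r1 = r2.
  move=> x r1 r2 /setD1P[r1i r1S] c1 /setD1P[r2i r2S] c2.
  move: c1 c2; rewrite !Phi_conn //.
  case/orP=> [c1|/andP[xi c1]]; case/orP=> [c2|/andP[xi' c2]].
  - exact: srf_uniq H r1S c1 r2S c2.
  - by move: r1i; rewrite (srf_uniq H r1S c1 iS xi') eqxx.
  - by move: r2i; rewrite (srf_uniq H r2S c2 iS xi) eqxx.
  - exact: srf_uniq H r1S c1 r2S c2.
move=> x.
have [rx [rxS xrx]] := srf_root x H.
have [rxi | rxi] := eqVneq rx i.
  exists rv; split.
    split; first by rewrite /= in_setD1 rvi rvS.
    by rewrite Phi_conn // -rxi xrx vrv orbT.
  move=> r' [r'S c']; apply: (key x) c' => //; first by rewrite /= in_setD1 rvi rvS.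
  by rewrite Phi_conn // -rxi xrx vrv orbT.
exists rx; split.
  split; first by rewrite /= in_setD1 rxi rxS.
  by rewrite Phi_conn // xrx.
move=> r' [r'S c']; apply: (key x) c' => //; first by rewrite /= in_setD1 rxi rxS.
by rewrite Phi_conn // xrx.
Qed.

Lemma edge_notin FR i v : ~~ conn FR.1 v i -> [set i; v] \notin FR.1.
Proof.
move=> nvi; have iv : i != v by apply: contraNneq nvi => ->; apply: connect0.
apply/negP => E; move/negP: nvi; apply.
by rewrite conn_sym; apply: connect1; rewrite /sub_adj iv E.
Qed.

Lemma Phi_inj FR1 FR2 i v1 v2 : srf FR1 -> srf FR2 -> i \in FR1.2 -> i \in FR2.2 ->
  ~~ conn FR1.1 v1 i -> ~~ conn FR2.1 v2 i ->
  Phi i FR1 v1 = Phi i FR2 v2 -> FR1 = FR2 /\ v1 = v2.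
Proof.
case: FR1 => F1 S1; case: FR2 => F2 S2 /= H1 H2 iS1 iS2 n1 n2 [EF ES].
have SS : S1 = S2 by rewrite -(setD1K iS1) ES setD1K.
have e1 : [set i; v1] \notin F1 := @edge_notin (F1, S1) _ _ n1.
have e2 : [set i; v2] \notin F2 := @edge_notin (F2, S2) _ _ n2.
have [v12 | v12] := eqVneq v1 v2.
  subst v2; split => //; rewrite SS; congr (_, _).
  by rewrite -(setU1K e1) -(setU1K e2) [_ |: F1]setUC [_ |: F2]setUC EF.
exfalso.
have iv1 : i != v1 by apply: contraNneq n1 => ->; apply: connect0.
have E12 : [set i; v1] != [set i; v2].
  apply/eqP => /set2_eq [[_ E]|[_ E]]; first by rewrite E eqxx in v12.
  by rewrite E eqxx in iv1.
have E2F1 : [set i; v2] \in F1.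
  move: (edge_set_in F2 i v2); rewrite -EF in_setU in_set1 => /orP[//|/eqP E].
  by move: E12; rewrite E eqxx.
have E1F2 : [set i; v1] \in F2.
  move: (edge_set_in F1 i v1); rewrite EF in_setU in_set1 => /orP[//|/eqP E].
  by move: E12; rewrite E eqxx.
have iv2 : i != v2 by apply: contraNneq n2 => ->; apply: connect0.
have c1iv2 : conn F1 v2 i by rewrite conn_sym; apply: connect1; rewrite /sub_adj iv2.
have c2iv1 : conn F2 v1 i by rewrite conn_sym; apply: connect1; rewrite /sub_adj iv1.
have [r1 [r1S c1]] := srf_root v1 H1; rewrite /= in r1S c1.
have r1i : r1 != i by apply: contraNneq n1 => <-.
set F0 := F1 :\ [set i; v2].
have F1E : F1 = F0 :|: [set [set i; v2]] by rewrite setUC setD1K.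
have F0F2 : F0 \subset F2.
  apply/subsetP => f /setD1P[fE fF1].
  have : f \in F1 :|: [set [set i; v1]] by rewrite in_setU fF1.
  by rewrite EF in_setU in_set1 (negPf fE) orbF.
have F0F1 : F0 \subset F1 by apply: subD1set.
have c0 : conn F0 v1 r1.
  move: c1; rewrite {1}F1E => /conn_add [//|[[H|H] _]].
    by case/negP: n1; apply: conn_mono F0F1 H.
  case/negP: n1; apply: connect_trans (conn_mono F0F1 H) c1iv2.
have := srf_uniq H2 (x := v1) (r1 := r1) (r2 := i); rewrite /= -SS => /(_ r1S).
by move=> /(_ (conn_mono F0F2 c0) iS1 c2iv1) /eqP; rewrite (negPf r1i).
Qed.

Lemma Phi_surj FR i : srf FR -> i \notin FR.2 ->
  exists v FR', [/\ srf FR', i \in FR'.2, e i v, ~~ conn FR'.1 v i & FR = Phi i FR' v].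
Proof.
case: FR => F S H /= iS.
have [r [rS ir]] := srf_root i H; rewrite /= in rS ir.
have ri : r != i by apply: contraNneq iS => <-.
have irc := ir.
case/connectP: ir => p0 p0P rE.
move: rE; case: (shortenP p0P) => p pP up _ rE.
case: p pP up rE ri => [|v q] pP up rE ri; first by rewrite rE eqxx in ri.
move: pP => /= /andP[siv vq].
move: (siv) => /andP[iv EF].
set E := [set i; v] in EF.
have eiv : e i v.
  have := srf_edges H EF; case/existsP => x /existsP[y /andP[exy /eqP/set2_eq]].
  by case=> [[-> ->]|[-> ->]] //; rewrite esym.
set F' := F :\ E.
have F'F : F' \subset F by apply: subD1set.
have FE : F = F' :|: [set E] by rewrite setUC setD1K.
have inq : i \notin v :: q by move: up; rewrite cons_uniq => /andP[].
have vr : conn F' v r.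
  apply/connectP; exists q => //.
  apply: (@sub_in_path _ [pred z | z != i]); last exact: vq.
    move=> x y /= xi yi /andP[xy xyF]; rewrite /sub_adj xy /F' in_setD1 xyF andbT.
    by apply: set2_neq; rewrite eq_sym.
  by apply/allP => z zq /=; apply: contraNneq inq => <-.
have nvi : ~~ conn F' v i.
  apply/negP => /connectP[w0 w0P iE].
  move: iE; case: (shortenP w0P) => w wP uw _ iE.
  case: w wP uw iE => [|w1 w] wP uw iE; first by rewrite iE eqxx in iv.
  case: w wP uw iE => [|w2 w] wP uw iE.
    rewrite /= in iE; subst w1.
    have vi : [set v; i] = E by rewrite /E setUC.
    by move: wP => /= /andP[/andP[_]]; rewrite /F' in_setD1 vi eqxx.
  have: cycle (sub_adj F) [:: v, w1, w2 & w].
    rewrite /cycle rcons_path.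
    have -> : sub_adj F (last v [:: w1, w2 & w]) v by rewrite -iE.
    rewrite andbT.
    apply: (sub_path _ wP) => x y /andP[xy xyF].
    by rewrite /sub_adj xy (subsetP F'F).
  by apply/negP; apply: (srf_acyc H).
have ni_S : forall rho, rho \in S -> ~~ conn F' i rho.
  move=> rho rhoS; apply/negP => irho.
  have := srf_uniq H rS irc rhoS (conn_mono F'F irho).
  move=> rrho; move: irho; rewrite -rrho => irho.
  by case/negP: nvi; apply: connect_trans vr _; rewrite conn_sym.
exists v, (F', i |: S); split => //=.
- split; first split.
  + by move=> f fF'; apply: (srf_edges H); apply: (subsetP F'F).
  + exact: acyclic_sub F'F (srf_acyc H).
  move=> x.
  have [rx [rxS xrx]] := srf_root x H; rewrite /= in rxS xrx.
  have uq : forall r1 r2, r1 \in i |: S -> conn F' x r1 -> r2 \in i |: S -> conn F' x r2 -> r1 = r2.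
    move=> r1 r2 /setU1P[->|r1S] c1 /setU1P[->|r2S] c2 //.
    - by case/negP: (ni_S _ r2S); rewrite conn_sym in c1; apply: connect_trans c1 c2.
    - by case/negP: (ni_S _ r1S); rewrite conn_sym in c2; apply: connect_trans c2 c1.
    - exact: srf_uniq H r1S (conn_mono F'F c1) r2S (conn_mono F'F c2).
  have [rho [rhoS xrho]] : exists rho, rho \in i |: S /\ conn F' x rho.
    move: xrx; rewrite FE => /conn_add [c|[[c|c] _]].
    - by exists rx; rewrite in_setU1 rxS orbT.
    - by exists i; rewrite in_setU1 eqxx.
    - by exists r; rewrite in_setU1 rS orbT; split => //; apply: connect_trans c vr.
  by exists rho; split => // r' [r'S c']; apply: uq xrho r'S c'.
- exact: setU11.
- rewrite /Phi /=; congr (_, _); first by rewrite setUC setD1K.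
  by rewrite setU1K.
Qed.

End G.

Section C.
Variables (n : nat) (e : rel 'I_n).
Hypotheses (esym : symmetric e) (eirr : irreflexive e).
Implicit Types (F : {set {set 'I_n}}) (a b x y : 'I_n) (FR : FRT n).
Local Notation conn F := (connect (sub_adj F)).
Local Notation srf := (srf e).

Definition RF : {set FRT n} := [set FR | `[< srf FR >]].

Lemma inRF FR : (FR \in RF) = `[< srf FR >].
Proof. by rewrite inE. Qed.

Lemma Bij i (G : FRT n -> nat) :
  \sum_(FR in RF | i \notin FR.2) G FR =
  \sum_(FR in RF | i \in FR.2) \sum_(v | e i v && ~~ conn FR.1 v i) G (Phi i FR v).
Proof.
pose D : {set FRT n * 'I_n} :=
  [set p | ((p.1 \in RF) && (i \in p.1.2)) && (e i p.2 && ~~ conn p.1.1 p.2 i)].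
pose h (p : FRT n * 'I_n) := Phi i p.1 p.2.
have EQ : [set FR in RF | i \notin FR.2] = h @: D.
  apply/setP => FR; rewrite !inE; apply/andP/imsetP.
    case=> /asboolP H iS.
    have [v [FR' [H' iS' eiv nvi ->]]] := Phi_surj esym H iS.
    by exists (FR', v) => //; rewrite !inE /= iS' eiv nvi !andbT; apply/asboolP.
  case=> [[FR' v]]; rewrite !inE /= => /andP[/andP[/asboolP H' iS'] /andP[eiv nvi]] ->.
  split; first by apply/asboolP; apply: Phi_valid.
  by rewrite /h /Phi /= setD11.
rewrite pair_big_dep.
rewrite (eq_bigl (mem [set FR in RF | i \notin FR.2])); last by move=> FR; rewrite !inE.
rewrite EQ big_imset.
  by apply: eq_bigl => p; rewrite !inE.
move=> [FR1 v1] [FR2 v2]; rewrite !inE /=.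
move=> /andP[/andP[/asboolP H1 iS1] /andP[_ n1]] /andP[/andP[/asboolP H2 iS2] /andP[_ n2]] E.
by case: (Phi_inj H1 H2 iS1 iS2 n1 n2 E) => -> ->.
Qed.

Definition g u j FR : nat := (u \in FR.2) && conn FR.1 j u.
Definition cnt u j := \sum_(FR in RF) g u j FR.

Lemma perFR u i FR : srf FR -> i \in FR.2 -> i != u ->
  (\sum_(j | e i j) 1 + 1) * \sum_(v | e i v && ~~ conn FR.1 v i) g u i (Phi i FR v)
  = \sum_(j | e i j) g u j FR +
    \sum_(v | e i v && ~~ conn FR.1 v i) \sum_(j | e i j) g u j (Phi i FR v).
Proof.
move=> H iS iu.
case uS: (u \in FR.2); last first.
  have gP0 : forall v j, g u j (Phi i FR v) = 0 by move=> v j; rewrite /g /= in_setD1 uS andbF.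
  have Z1 : \sum_(v | e i v && ~~ conn FR.1 v i) g u i (Phi i FR v) = 0.
    by rewrite big1 // => v _; rewrite gP0.
  have Z2 : \sum_(j | e i j) g u j FR = 0 by rewrite big1 // => j _; rewrite /g uS.
  have Z3 : \sum_(v | e i v && ~~ conn FR.1 v i) \sum_(j | e i j) g u j (Phi i FR v) = 0.
    by rewrite big1 // => v _; rewrite big1 // => j _; rewrite gP0.
  by rewrite Z1 Z2 Z3 muln0.
have ui : u != i by rewrite eq_sym.
have excl : forall j, conn FR.1 j u -> conn FR.1 j i -> False.
  by move=> j c1 c2; move: ui; rewrite (srf_uniq H uS c1 iS c2) eqxx.
have gPhi : forall v j, ~~ conn FR.1 v i ->
    g u j (Phi i FR v) = conn FR.1 j u || (conn FR.1 j i && conn FR.1 v u).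
  by move=> v j nvi; rewrite /g /= in_setD1 ui uS /= (Phi_conn _ H).
set M := \sum_(v | e i v) (conn FR.1 v u : nat).
set a := \sum_(j | e i j) (conn FR.1 j i : nat).
set K := \sum_(v | e i v && ~~ conn FR.1 v i) 1.
have dE : \sum_(j | e i j) 1 = a + K.
  rewrite (bigID (fun j => conn FR.1 j i)) /=; congr (_ + _).
  by rewrite /a big_mkcondr /=; apply: eq_bigr => j _; case: (conn _ j i).
have L1 : \sum_(v | e i v && ~~ conn FR.1 v i) g u i (Phi i FR v) = M.
  rewrite big_mkcondr /=; apply: eq_bigr => v _.
  case nvi: (conn FR.1 v i) => /=.
    by case vu: (conn FR.1 v u) => //; case: (excl v vu nvi).
  rewrite gPhi ?nvi // connect0 /=.
  case iu': (conn FR.1 i u) => //; by case: (excl i iu' (connect0 _ _)).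
have L2 : \sum_(j | e i j) g u j FR = M by apply: eq_bigr => j _; rewrite /g uS.
have L3 : forall v, ~~ conn FR.1 v i ->
    \sum_(j | e i j) g u j (Phi i FR v) = M + (conn FR.1 v u : nat) * a.
  move=> v nvi; rewrite /M /a big_distrr -big_split /=; apply: eq_bigr => j _.
  rewrite gPhi //.
  case c1: (conn FR.1 j u); case c2: (conn FR.1 j i) => //=.
  - by case: (excl j c1 c2).
  - by rewrite muln0.
  - by rewrite muln1.
  - by rewrite muln0.
have L4 : \sum_(v | e i v && ~~ conn FR.1 v i) \sum_(j | e i j) g u j (Phi i FR v)
    = \sum_(v | e i v && ~~ conn FR.1 v i) (M + (conn FR.1 v u : nat) * a).
  by apply: eq_bigr => v /andP[_ nvi]; apply: L3.
have L5 : \sum_(v | e i v && ~~ conn FR.1 v i) (conn FR.1 v u : nat) = M.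
  have Z : \sum_(v | e i v && conn FR.1 v i) (conn FR.1 v u : nat) = 0.
    apply: big1 => v /andP[_ vi]; case vu: (conn FR.1 v u) => //; case: (excl v vu vi).
  by rewrite /M [in RHS](bigID (fun v => conn FR.1 v i)) /= Z add0n.
rewrite L1 L2 L4 big_split /= -big_distrl /= L5.
have L6 : \sum_(v | e i v && ~~ conn FR.1 v i) M = K * M.
  by rewrite /K big_distrl /=; apply: eq_bigr => v _; rewrite mul1n.
rewrite L6 dE; ring.
Qed.

Lemma key u i : i != u ->
  (\sum_(j | e i j) 1 + 1) * cnt u i = \sum_(j | e i j) cnt u j.
Proof.
move=> iu; rewrite /cnt exchange_big /=.
rewrite (bigID (fun FR => i \in FR.2)) /=.
rewrite [in RHS](bigID (fun FR => i \in FR.2)) /=.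
have Z : \sum_(FR in RF | i \in FR.2) g u i FR = 0.
  apply: big1 => FR; rewrite inRF => /andP[/asboolP H iS].
  rewrite /g; case uS: (u \in FR.2) => //=; case c: (conn FR.1 i u) => //.
  by move: iu; rewrite (srf_roots H iS uS c) eqxx.
rewrite Z add0n !Bij big_distrr -big_split /=.
apply: eq_bigr => FR; rewrite inRF => /andP[/asboolP H iS].
exact: perFR.
Qed.

End C.

Local Open Scope ring_scope.

Section L.
Variables (R : realFieldType) (n : nat) (e : rel 'I_n).
Hypotheses (esym : symmetric e) (eirr : irreflexive e).

Lemma degreeE i : degree e i = (\sum_(j | e i j) 1)%N.
Proof. by rewrite /degree -sum1_card; apply: eq_bigl => j; rewrite inE. Qed.

Definition Amx : 'M[R]_n := 1%:M + laplacian R e.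

Lemma AmxE i j : Amx i j =
  (i == j)%:R + (if i == j then (degree e i)%:R else 0) - (if e i j then 1 else 0).
Proof. by rewrite !mxE addrA. Qed.

Lemma sum_ifE (f : 'I_n -> R) i : \sum_(j | e i j) f j = \sum_j f j * (if e i j then 1 else 0).
Proof. by rewrite big_mkcond /=; apply: eq_bigr => j _; case: (e i j); rewrite ?mulr1 ?mulr0. Qed.

Lemma sum_rowA (f : 'I_n -> R) i :
  \sum_j Amx i j * f j = (1 + (degree e i)%:R) * f i - \sum_(j | e i j) f j.
Proof.
rewrite sum_ifE (bigD1 i) //= [X in _ - X](bigD1 i) //= AmxE eqxx eirr /=.
have -> : \sum_(j | j != i) Amx i j * f j =
    - \sum_(j | j != i) f j * (if e i j then 1 else 0).
  rewrite -sumrN; apply: eq_bigr => j ji; rewrite AmxE eq_sym (negPf ji) /= add0r.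
  by rewrite sub0r mulNr mulrC.
ring.
Qed.

Lemma sum_colA (f : 'I_n -> R) i :
  \sum_j f j * Amx j i = (1 + (degree e i)%:R) * f i - \sum_(j | e i j) f j.
Proof.
rewrite -sum_rowA; apply: eq_bigr => j _; rewrite mulrC !AmxE esym.
by case: eqVneq => [->|] //.
Qed.

Lemma deg_sum i : \sum_(j | e i j) (1 : R) = (degree e i)%:R.
Proof. by rewrite degreeE natr_sum. Qed.

Lemma Amx_unit : Amx \in unitmx.
Proof.
rewrite unitmxE unitfE; apply/negP => /det0P [v vn0 vA].
have [k vk] : exists k, v 0 k != 0.
  apply/existsP; apply: contraNT vn0; rewrite negb_exists => /forallP H.
  by apply/eqP/rowP => k; rewrite mxE; apply/eqP; move: (H k); rewrite negbK.
case: (@arg_maxP _ _ _ k xpredT (fun k => `|v 0 k|) isT) => i _ Hi.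
have E : (1 + (degree e i)%:R) * v 0 i = \sum_(j | e i j) v 0 j.
  apply/eqP; rewrite -subr_eq0 -sum_colA; apply/eqP.
  by move/rowP: vA => /(_ i); rewrite !mxE.
have : (1 + (degree e i)%:R) * `|v 0 i| <= (degree e i)%:R * `|v 0 i|.
  rewrite -[1 + _]ger0_norm ?addr_ge0 // -normrM E.
  apply: le_trans (ler_norm_sum _ _ _) _.
  rewrite -deg_sum mulr_suml; apply: ler_sum => j _; rewrite mul1r; exact: Hi.
rewrite mulrDl mul1r -lerBrDr subrr => H0.
have vi0 : `|v 0 i| = 0 by apply/eqP; rewrite eq_le H0 normr_ge0.
have hk : `|v 0 k| <= `|v 0 i| by exact: (Hi k isT).
rewrite vi0 in hk.
have : `|v 0 k| == 0 by rewrite eq_le hk normr_ge0.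
by rewrite normr_eq0 (negPf vk).
Qed.

End L.

Section F.
Variables (R : realFieldType) (n : nat) (e : rel 'I_n).
Hypotheses (esym : symmetric e) (eirr : irreflexive e).

Lemma srf_empty : srf e (set0, setT).
Proof.
split; first split.
- by move=> f; rewrite in_set0.
- move=> [|x p] // _ _; rewrite /cycle; case: p => [|y p] /=;
  by rewrite /sub_adj in_set0 andbF.
move=> x; exists x; split; first by rewrite in_setT connect0.
move=> r [_ /connectP [[|y p] /=]]; first by move=> _ ->.
by rewrite /sub_adj in_set0 andbF.
Qed.

Lemma cnt_pos u : (0 < cnt e u u)%N.
Proof.
rewrite /cnt (bigD1 (set0, setT)) /=; last by rewrite inRF; apply/asboolP; exact: srf_empty.
have -> : g u u (set0, [set: 'I_n]) = 1%N by rewrite /g /= in_setT connect0.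
by [].
Qed.

Lemma card_rfa u : #|rooted_forests_at e u| = cnt e u u.
Proof.
rewrite -sum1_card (eq_bigl (fun FR => (FR \in RF e) && (u \in FR.2))); last first.
  by move=> FR; rewrite !inE.
rewrite /cnt big_mkcondr /=; apply: eq_big => // FR _.
by rewrite /g connect0 andbT; case: (u \in FR.2).
Qed.

Lemma sum_tree u : (\sum_(FR in rooted_forests_at e u) tree_size FR.1 u)%N =
  (\sum_x cnt e u x)%N.
Proof.
rewrite /cnt exchange_big /= (eq_bigl (fun FR => (FR \in RF e) && (u \in FR.2))); last first.
  by move=> FR; rewrite !inE.
rewrite big_mkcondr /=; apply: eq_big => // FR _.
case: ifP => uS; last by rewrite big1 // => x _; rewrite /g uS.
rewrite /tree_size -sum1_card big_mkcond /=; apply: eq_bigr => x _.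
rewrite inE /g uS /= conn_sym; by case: (connect _ u x).
Qed.

Lemma colsumW u : \sum_j (invmx (Amx R e)) j u = 1.
Proof.
set r : 'rV[R]_n := const_mx 1.
have rA : r *m Amx R e = r.
  apply/rowP => j; rewrite !mxE.
  rewrite (eq_bigr (fun i => (fun _ => 1) i * Amx R e i j)); last by move=> i _; rewrite mxE.
  by rewrite sum_colA // mulr1 deg_sum // addrK.
have rW : r *m invmx (Amx R e) = r.
  by rewrite -{1}rA -mulmxA mulmxV ?Amx_unit // mulmx1.
move/rowP: rW => /(_ u); rewrite !mxE => <-.
by apply: eq_bigr => j _; rewrite mxE mul1r.
Qed.

Lemma s_val_eq u : s_val R e u = ((invmx (Amx R e)) u u)^-1 /\ 0 < (invmx (Amx R e)) u u.
Proof.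
set W := invmx (Amx R e).
set c : 'cV[R]_n := \col_j (cnt e u j)%:R.
set K := (Amx R e *m c) u 0.
have Ac : Amx R e *m c = \col_i (if i == u then K else 0).
  apply/colP => i; rewrite [RHS]mxE; case: eqVneq => [->|iu] //.
  rewrite mxE (eq_bigr (fun j => Amx R e i j * (fun j => (cnt e u j)%:R) j)); last first.
    by move=> j _; rewrite /c !mxE.
  rewrite sum_rowA //; apply/eqP; rewrite subr_eq0; apply/eqP.
  have := congr1 (fun m => m%:R : R) (key esym iu).
  rewrite /= natrM natrD -degreeE natr_sum => <-.
  by rewrite addrC.
have cW : forall j, (cnt e u j)%:R = W j u * K.
  move=> j.
  have : c = W *m (Amx R e *m c) by rewrite mulmxA mulVmx ?Amx_unit // mul1mx.
  move/colP => /(_ j); rewrite Ac !mxE => ->.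
  rewrite (bigD1 u) //= mxE eqxx big1 ?addr0 // => k ku.
  by rewrite mxE (negPf ku) mulr0.
have sumc : ((\sum_j cnt e u j)%N)%:R = K.
  rewrite natr_sum (eq_bigr _ (fun j _ => cW j)) -mulr_suml.
  by rewrite colsumW mul1r.
have Kpos : 0 < K.
  rewrite -sumc ltr0n (bigD1 u) //=.
  by apply: leq_trans (cnt_pos u) (leq_addr _ _).
have cuu := cW u.
have Wuu : W u u = (cnt e u u)%:R / K.
  by rewrite cuu mulfK // gt_eqF.
split.
  rewrite /s_val sum_tree card_rfa sumc Wuu invf_div //.
by rewrite Wuu divr_gt0 // ltr0n cnt_pos.
Qed.

End F.

Lemma final (R : realFieldType) (a b : R) : 0 < a -> 0 < b ->
  Num.min a^-1 b^-1 / Num.max a^-1 b^-1 = Num.min a b / Num.max a b.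
Proof.
move=> a0 b0.
have [ab|ba] := lerP a b.
  have : b^-1 <= a^-1 by rewrite lef_pV2 ?posrE.
  move=> h; rewrite (min_r h) (max_l h).
  by rewrite invrK mulrC.
have h : a^-1 <= b^-1 by rewrite lef_pV2 ?posrE // ltW.
rewrite (min_l h) (max_r h).
by rewrite invrK mulrC.
Qed.

Unset Implicit Arguments.

Theorem theorem4p5 (R : realFieldType) (n : nat) (e : rel 'I_n)
  (He : simple_graph e) (u v : 'I_n) :
  forest_sim R e u v =
  Num.min (forest_matrix R e u u) (forest_matrix R e v v)
    / Num.max (forest_matrix R e u u) (forest_matrix R e v v).
Proof.
case: He => esym eirr.
have [su pu] := s_val_eq R esym eirr u.
have [sv pv] := s_val_eq R esym eirr v.
by rewrite /forest_sim su sv final.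
Qed.
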